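(* Let $k$ be a field of characteristic $p>0$, $M$ a lattice, $S\subset M$ a finitely generated subsemigroup containing $0$, $R=k[S]$, and $L$ the subgroup of $M$ generated by $S$. Fix $q=p^e$. Let $H\subset\frac1qL$ be a finitely generated $S$-module (i.e. $H+S\subset H$ and $H=\bigcup_{j}(h_j+S)$ for finitely many $h_j$), so that $k[H]\subset k[\frac1qL]$ is an $R$-module generated by monomials. Then the set of monomials of $k[H]$ which generate a free (graded) direct summand of $k[H]$ is $\{\chi^{\vec v}:\vec v\in H,\ \vec v+\vec k\notin H\text{ for all }\vec k\in L\setminus S\}$. Moreover, if $0$ is the only unit in $H$, then the free rank $a_e$ of $k[H]$ as an $R$-module equals the cardinality of this set.
   Context: $k[H]$ is the $k$-span of the monomials $\chi^{\vec v}$, $\vec v\in H$, with its natural $\frac1qL$-grading. The free rank is the number of copies of $R$ (up to shift) in a decomposition of $k[H]$ into graded indecomposable $R$-modules. *)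

(* Defs.v *)
From HB Require Import structures.
From mathcomp Require Import all_boot all_order all_algebra.
From mathcomp Require Import boolp.
Set Implicit Arguments. Unset Strict Implicit. Unset Printing Implicit Defensive.
Import Order.TTheory GRing.Theory Num.Theory.
Local Open Scope ring_scope.

(* Conventions: the lattice M is Z^n = 'rV[int]_n, embedded in Q^n = 'rV[rat]_n;
   (1/q)L is a subset of Q^n.  Elements of k[H] (and of k[(1/q)L]) are functions
   Q^n -> k with finite support (the coefficient of chi^w is f w). *)

Definition toQ (n : nat) (v : 'rV[int]_n) : 'rV[rat]_n :=
  map_mx (fun z : int => z%:~R) v.

Definition fg_monoid (n : nat) (S : 'rV[int]_n -> Prop) : Prop :=
  [/\ S 0, (forall x y, S x -> S y -> S (x + y)) &
   exists gens : seq 'rV[int]_n, (forall g, g \in gens -> S g) /\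
     forall v, S v -> exists c : 'I_(size gens) -> nat,
       v = \sum_(i < size gens) gens`_i *+ c i].

Definition gen_group (n : nat) (S : 'rV[int]_n -> Prop) (v : 'rV[int]_n) : Prop :=
  forall G : 'rV[int]_n -> Prop, G 0 -> (forall x y, G x -> G y -> G (x - y)) ->
    (forall s, S s -> G s) -> G v.

Definition frac_lattice (n q : nat) (S : 'rV[int]_n -> Prop) (w : 'rV[rat]_n) : Prop :=
  exists l, gen_group S l /\ w = (q%:R)^-1 *: toQ l.

Definition fg_module (n : nat) (S : 'rV[int]_n -> Prop) (H : 'rV[rat]_n -> Prop) : Prop :=
  (forall h s, H h -> S s -> H (h + toQ s)) /\
  exists hs : seq 'rV[rat]_n, forall v,
    H v <-> exists j s, [/\ (j < size hs)%N, S s & v = hs`_j + toQ s].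

Section Modules.
Variables (k : fieldType) (n : nat) (S : 'rV[int]_n -> Prop) (H : 'rV[rat]_n -> Prop).

Definition V := 'rV[rat]_n.

Definition kH (f : V -> k) : Prop :=
  (exists supp : seq V, forall v, f v != 0 -> v \in supp) /\
  (forall v, f v != 0 -> H v).

(* an element of R = k[S], given as a formal finite sum  sum c * chi^s, s in S *)
Definition Relt (r : seq (k * 'rV[int]_n)) : Prop := forall cs, cs \in r -> S cs.2.

Definition Rzero (r : seq (k * 'rV[int]_n)) : Prop :=
  forall s, \sum_(cs <- r | cs.2 == s) cs.1 = 0.

(* action of r in R on f in k[(1/q)L]: chi^s * chi^w = chi^(s+w) *)
Definition act (r : seq (k * 'rV[int]_n)) (f : V -> k) : V -> k :=
  fun w => \sum_(cs <- r) cs.1 * f (w - toQ cs.2).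

Definition mono (v : V) : V -> k := fun w => if w == v then 1 else 0.

Definition submodule (N : (V -> k) -> Prop) : Prop :=
  [/\ forall f, N f -> kH f,
      N (fun _ => 0),
      (forall f g, N f -> N g -> N (fun w => f w + g w)) &
      (forall r f, Relt r -> N f -> N (act r f))].

Definition graded_sub (N : (V -> k) -> Prop) : Prop :=
  submodule N /\ forall f d, N f -> N (fun w => if w == d then f d else 0).

Definition dsum2 (A B N : (V -> k) -> Prop) : Prop :=
  [/\ (forall f, A f -> N f), (forall f, B f -> N f),
      (forall f, N f -> exists a b, [/\ A a, B b & forall w, f w = a w + b w]) &
      (forall a b, A a -> B b -> (forall w, a w + b w = 0) ->
         forall w, a w = 0 /\ b w = 0)].

Definition dsum (m : nat) (Ns : 'I_m -> (V -> k) -> Prop) (N : (V -> k) -> Prop) : Prop :=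
  [/\ (forall i f, Ns i f -> N f),
      (forall f, N f -> exists fs : 'I_m -> V -> k,
          (forall i, Ns i (fs i)) /\ forall w, f w = \sum_(i < m) fs i w) &
      (forall fs : 'I_m -> V -> k, (forall i, Ns i (fs i)) ->
          (forall w, \sum_(i < m) fs i w = 0) -> forall i w, fs i w = 0)].

Definition zero_mod (N : (V -> k) -> Prop) : Prop := forall f, N f -> forall w, f w = 0.

Definition indecomposable (N : (V -> k) -> Prop) : Prop :=
  [/\ graded_sub N, ~ zero_mod N &
      forall A B, graded_sub A -> graded_sub B -> dsum2 A B N -> zero_mod A \/ zero_mod B].

Definition cyclic (g : V -> k) : (V -> k) -> Prop :=
  fun f => exists r, Relt r /\ forall w, f w = act r g w.

(* R -> R g, r |-> r g, is injective, i.e. R g is free with basis g *)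
Definition free_cyclic (g : V -> k) : Prop :=
  forall r, Relt r -> (forall w, act r g w = 0) -> Rzero r.

(* N is isomorphic, as a graded R-module, to a shift R(-d) of R
   (the isomorphism R(-d) -> N sends 1 to a homogeneous g of degree d) *)
Definition free_rank1 (N : (V -> k) -> Prop) : Prop :=
  exists (d : V) (g : V -> k), [/\ forall w, g w != 0 -> w = d,
     (forall f, N f <-> cyclic g f) & free_cyclic g].

Definition free_summand_mono (v : V) : Prop :=
  [/\ H v, free_cyclic (mono v) &
      exists C, graded_sub C /\ dsum2 (cyclic (mono v)) C kH].

Definition decomposition (m : nat) (Ns : 'I_m -> (V -> k) -> Prop) : Prop :=
  (forall i, indecomposable (Ns i)) /\ dsum Ns kH.

Definition nfree (m : nat) (Ns : 'I_m -> (V -> k) -> Prop) : nat :=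
  #|[set i : 'I_m | `[< free_rank1 (Ns i) >]]|.

End Modules.

(* Main.v *)
Require Import Defs.
From HB Require Import structures.
From mathcomp Require Import all_boot all_order all_algebra.
From mathcomp Require Import boolp.
Import GRing.Theory Num.Theory.
Local Open Scope ring_scope.
Set Implicit Arguments. Unset Strict Implicit.

Lemma toQD n (a b : 'rV[int]_n) : toQ (a + b) = toQ a + toQ b.
Proof. by apply/matrixP => i j; rewrite !mxE intrD. Qed.
Lemma toQN n (a : 'rV[int]_n) : toQ (- a) = - toQ a.
Proof. by apply/matrixP => i j; rewrite !mxE intrN. Qed.
Lemma toQ0 n : toQ (0 : 'rV[int]_n) = 0.
Proof. by apply/matrixP => i j; rewrite !mxE. Qed.
Lemma toQB n (a b : 'rV[int]_n) : toQ (a - b) = toQ a - toQ b.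
Proof. by rewrite toQD toQN. Qed.
Lemma toQ_inj n : injective (@toQ n).
Proof.
move=> a b /matrixP E; apply/matrixP => i j; move: (E i j); rewrite !mxE.
exact: intr_inj.
Qed.

Lemma gg0 n (S : 'rV[int]_n -> Prop) : gen_group S 0.
Proof. by move=> G. Qed.
Lemma ggB n (S : 'rV[int]_n -> Prop) x y : gen_group S x -> gen_group S y -> gen_group S (x - y).
Proof. move=> hx hy G g0 gB gS; apply: (gB); [exact: (hx G) | exact: (hy G)]. Qed.
Lemma ggN n (S : 'rV[int]_n -> Prop) x : gen_group S x -> gen_group S (- x).
Proof. by move=> hx; rewrite -sub0r; apply: ggB => //; apply: gg0. Qed.
Lemma ggD n (S : 'rV[int]_n -> Prop) x y : gen_group S x -> gen_group S y -> gen_group S (x + y).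
Proof. by move=> hx hy; rewrite -[y]opprK; apply: ggB => //; apply: ggN. Qed.
Lemma ggS n (S : 'rV[int]_n -> Prop) x : S x -> gen_group S x.
Proof. by move=> hx G _ _ hS; apply: hS. Qed.
Lemma gg_diff n (S : 'rV[int]_n -> Prop) l : fg_monoid S -> gen_group S l ->
  exists s1 s2, [/\ S s1, S s2 & l = s1 - s2].
Proof.
case=> S0 SD _ hl; apply: (hl (fun l => exists s1 s2, [/\ S s1, S s2 & l = s1 - s2])).
- by exists 0, 0; rewrite subr0.
- move=> x y [a1 [a2 [h1 h2 ->]]] [b1 [b2 [g1 g2 ->]]].
  exists (a1 + b2), (a2 + b1); split; try by apply: SD.
  by rewrite opprB opprD !addrA; congr (_ - _); rewrite addrAC -!addrA [b2 + _]addrC.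
- by move=> s hs; exists s, 0; rewrite subr0.
Qed.

Lemma sum_nz (k : fieldType) (I : eqType) (r : seq I) (F : I -> k) :
  \sum_(x <- r) F x != 0 -> exists2 x, x \in r & F x != 0.
Proof.
move=> h; apply: contrapT => hn; move/eqP: h; apply; rewrite big_seq_cond; apply: big1 => i /andP [hi _].
by apply: contrapT => hF; apply: hn; exists i => //; apply/eqP.
Qed.

Definition restr (k : fieldType) n (N : (V n -> k) -> Prop) (P : V n -> Prop) :=
  fun f => N f /\ forall w, f w != 0 -> P w.

Lemma mono_eq (k : fieldType) n (v w : V n) (a : V n) :
  mono k v (w - a) = mono k (v + a) w.
Proof. by rewrite /mono subr_eq. Qed.

Lemma monoii (k : fieldType) n (v : V n) : mono k v v = 1.
Proof. by rewrite /mono eqxx. Qed.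

Lemma mono_nz (k : fieldType) n (v w : V n) : mono k v w != 0 -> w = v.
Proof. by rewrite /mono; case: (w =P v) => // _; rewrite eqxx. Qed.

Lemma fgm_cl n (S : 'rV[int]_n -> Prop) H : fg_module S H ->
  forall h s, H h -> S s -> H (h + toQ s).
Proof. by case. Qed.

Lemma kH_act (k : fieldType) n (S : 'rV[int]_n -> Prop) H r (f : V n -> k) :
  fg_module S H -> Relt S r -> kH H f -> kH H (act r f).
Proof.
move=> hM hr [[sp hsp] hfH]; split.
  exists [seq w + toQ cs.2 | w <- sp, cs <- r] => w /sum_nz [cs hcs].
  rewrite mulf_eq0 negb_or => /andP[_ hfw].
  have := allpairs_f (fun w (cs : k * 'rV[int]_n) => w + toQ cs.2) (hsp _ hfw) hcs.
  by rewrite /= subrK.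
move=> w /sum_nz [cs hcs]; rewrite mulf_eq0 negb_or => /andP[_ hfw].
by rewrite -(subrK (toQ cs.2) w); apply: (fgm_cl hM); [apply: hfH | apply: hr].
Qed.

Lemma mono_kH (k : fieldType) n (H : V n -> Prop) v : H v -> kH H (mono k v).
Proof.
move=> hv; split; last by move=> w /mono_nz ->.
by exists [:: v] => w /mono_nz ->; rewrite inE.
Qed.

Lemma Relt1 (k : fieldType) n (S : 'rV[int]_n -> Prop) (c : k) s : S s -> Relt S [:: (c, s)].
Proof. by move=> hs cs; rewrite inE => /eqP ->. Qed.
Arguments Relt1 {k n S} c {s}.

Lemma act1 (k : fieldType) n (c : k) (s : 'rV[int]_n) f :
  act [:: (c, s)] f = fun w => c * f (w - toQ s).
Proof. by apply: funext => w; rewrite /act big_seq1. Qed.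

Lemma gr_sub (k : fieldType) n S H (N : (V n -> k) -> Prop) :
  graded_sub S H N -> submodule S H N.
Proof. by case. Qed.

Lemma gr_kH (k : fieldType) n S H (N : (V n -> k) -> Prop) f :
  graded_sub S H N -> N f -> kH H f.
Proof. by case=> [[h _ _ _] _]; apply: h. Qed.

Lemma gr_zero (k : fieldType) n S H (N : (V n -> k) -> Prop) :
  graded_sub S H N -> N (fun _ => 0).
Proof. by case=> [[_ h _ _] _]. Qed.

Lemma gr_add (k : fieldType) n S H (N : (V n -> k) -> Prop) f g :
  graded_sub S H N -> N f -> N g -> N (fun w => f w + g w).
Proof. by case=> [[_ _ h _] _]; apply: h. Qed.

Lemma gr_act (k : fieldType) n S H (N : (V n -> k) -> Prop) r f :
  graded_sub S H N -> Relt S r -> N f -> N (act r f).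
Proof. by case=> [[_ _ _ h] _]; apply: h. Qed.

Lemma gr_scal (k : fieldType) n S H (N : (V n -> k) -> Prop) (c : k) f :
  S 0 -> graded_sub S H N -> N f -> N (fun w => c * f w).
Proof.
move=> S0 hN hf; have := gr_act hN (Relt1 c S0) hf.
by rewrite act1 toQ0; congr N; apply: funext => w; rewrite subr0.
Qed.

Lemma gr_G1 (k : fieldType) n S H (N : (V n -> k) -> Prop) f d :
  S 0 -> graded_sub S H N -> N f -> f d != 0 -> N (mono k d).
Proof.
move=> S0 hN hf hd; have := gr_scal (f d)^-1 S0 hN (proj2 hN f d hf).
congr N; apply: funext => w; rewrite /mono; case: (w =P d) => _.
  by rewrite mulVf.
by rewrite mulr0.
Qed.

Lemma gr_G3 (k : fieldType) n S H (N : (V n -> k) -> Prop) d s :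
  graded_sub S H N -> N (mono k d) -> S s -> N (mono k (d + toQ s)).
Proof.
move=> hN hd hs; have := gr_act hN (Relt1 1 hs) hd.
by rewrite act1; congr N; apply: funext => w; rewrite mul1r mono_eq.
Qed.

Lemma G2 (k : fieldType) n (H : V n -> Prop) (N : (V n -> k) -> Prop) f :
  N (fun _ => 0) -> (forall f g, N f -> N g -> N (fun w => f w + g w)) ->
  (forall c f, N f -> N (fun w => c * f w)) -> kH H f ->
  (forall d, f d != 0 -> N (mono k d)) -> N f.
Proof.
move=> N0 NA NS [[sp hsp] _] hm.
pose l := [seq d <- undup sp | f d != 0].
have claim : forall l', (forall d, d \in l' -> N (mono k d)) ->
    N (fun w => \sum_(d <- l') f d * mono k d w).
  elim=> [|d l' IH] hl.
    by have -> : (fun w => \sum_(d <- [::]) f d * mono k d w) = (fun _ => 0)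
      by apply: funext => w; rewrite big_nil.
  have -> : (fun w => \sum_(d0 <- d :: l') f d0 * mono k d0 w) =
     (fun w => f d * mono k d w + \sum_(d0 <- l') f d0 * mono k d0 w)
    by apply: funext => w; rewrite big_cons.
  apply: NA; first by apply: NS; apply: hl; rewrite inE eqxx.
  by apply: IH => d0 hd0; apply: hl; rewrite inE hd0 orbT.
have E : f = (fun w => \sum_(d <- l) f d * mono k d w).
  apply: funext => w; have [hw|hw] := eqVneq (f w) 0.
    rewrite hw; symmetry; apply: big1_seq => d /andP [_ hd].
    rewrite /mono; case: (w =P d) => [<-|_]; first by rewrite hw mul0r.
    by rewrite mulr0.
  have wl : w \in l by rewrite mem_filter hw mem_undup hsp.
  rewrite (bigD1_seq w) //=; last by rewrite filter_uniq // undup_uniq.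
  rewrite monoii mulr1 big1 ?addr0 // => d hd.
  by rewrite /mono eq_sym (negbTE hd) mulr0.
rewrite E; apply: claim => d; rewrite mem_filter => /andP [hd _]; exact: hm.
Qed.

Lemma gr_G2 (k : fieldType) n S H (N : (V n -> k) -> Prop) f :
  S 0 -> graded_sub S H N -> kH H f -> (forall d, f d != 0 -> N (mono k d)) -> N f.
Proof.
move=> S0 hN; apply: (G2 (gr_zero hN)).
- by move=> f1 g1; apply: (gr_add hN).
- by move=> c g; apply: (gr_scal c S0 hN).
Qed.

Lemma restr_graded (k : fieldType) n S H (N : (V n -> k) -> Prop) (P : V n -> Prop) :
  fg_module S H -> graded_sub S H N ->
  (forall w s, S s -> H w -> P w -> P (w + toQ s)) -> graded_sub S H (restr N P).
Proof.
move=> hM hN hP; split; first split.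
- by move=> f [hf _]; exact: (gr_kH hN hf).
- by split; [exact: gr_zero hN | move=> w; rewrite eqxx].
- move=> f g [hf pf] [hg pg]; split; first exact: (gr_add hN hf hg).
  move=> w hw; have [h0|h0] := eqVneq (f w) 0; last exact: pf.
  by apply: pg; move: hw; rewrite h0 add0r.
- move=> r f hr [hf pf]; split; first exact: (gr_act hN hr hf).
  move=> w /sum_nz [cs hcs]; rewrite mulf_eq0 negb_or => /andP[_ hfw].
  rewrite -(subrK (toQ cs.2) w); apply: hP; first exact: hr.
    by case: (gr_kH hN hf) => _; apply.
  exact: pf.
- move=> f d [hf pf]; split; first exact: (proj2 hN).
  by move=> w; case: (w =P d) => [->|_]; [apply: pf | rewrite eqxx].
Qed.

Lemma restr_dsum2 (k : fieldType) n S H (N : (V n -> k) -> Prop) (P : V n -> Prop) :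
  S 0 -> graded_sub S H N -> dsum2 (restr N P) (restr N (fun w => ~ P w)) N.
Proof.
move=> S0 hN; split.
- by move=> f [].
- by move=> f [].
- move=> f hf; have hk := gr_kH hN hf.
  have sub : forall b : bool, N (fun w => if (`[< P w >] == b) then f w else 0).
    move=> b; apply: (gr_G2 S0 hN).
      case: hk => [[sp hsp] hH]; split.
        by exists sp => w; case: ifP => _; [apply: hsp | rewrite eqxx].
      by move=> w; case: ifP => _; [apply: hH | rewrite eqxx].
    by move=> d; case: ifP => _ hd; [apply: (gr_G1 S0 hN hf hd) | move: hd; rewrite eqxx].
  exists (fun w => if (`[< P w >] == true) then f w else 0).
  exists (fun w => if (`[< P w >] == false) then f w else 0).
  split.
  + split; first exact: sub.
    by move=> w; case: ifP => [/eqP/asboolP //|_]; rewrite eqxx.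
  + split; first exact: sub.
    by move=> w; case: ifP => [/eqP/asboolP //|_]; rewrite eqxx.
  + by move=> w; case: (asboolP (P w)) => _ /=; rewrite ?addr0 ?add0r.
- move=> a b [ha pa] [hb pb] E w.
  have [hp|hp] := pselect (P w).
    have bw : b w = 0 by apply: contrapT => /eqP /pb.
    by split => //; move: (E w); rewrite bw addr0.
  have aw : a w = 0 by apply: contrapT => /eqP /pa.
  by split => //; move: (E w); rewrite aw add0r.
Qed.

Lemma dsum2_ext (k : fieldType) n (A A' B N : (V n -> k) -> Prop) :
  (forall f, A f <-> A' f) -> dsum2 A' B N -> dsum2 A B N.
Proof.
move=> e [h1 h2 h3 h4]; split.
- by move=> f /e; apply: h1.
- exact: h2.
- by move=> f /h3 [a [b [ha hb E]]]; exists a, b; split => //; apply/e.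
- by move=> a b /e ha hb; apply: h4.
Qed.

Lemma dsum2_disj (k : fieldType) n S H (A B N : (V n -> k) -> Prop) w :
  S 0 -> graded_sub S H B -> dsum2 A B N -> A (mono k w) -> B (mono k w) -> False.
Proof.
move=> S0 hB [_ _ _ h4] ha hb.
have hb' := gr_scal (-1) S0 hB hb.
have := h4 _ _ ha hb'.
have : forall x, mono k w x + -1 * mono k w x = 0 by move=> x; rewrite mulN1r subrr.
move=> E /(_ E w) [+ _]; rewrite monoii => /eqP; rewrite oner_eq0.
by [].
Qed.

Lemma dsum2_cover (k : fieldType) n S H (A B N : (V n -> k) -> Prop) w :
  S 0 -> graded_sub S H A -> graded_sub S H B -> dsum2 A B N -> N (mono k w) ->
  A (mono k w) \/ B (mono k w).
Proof.
move=> S0 hA hB [_ _ h3 _] /h3 [a [b [ha hb E]]].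
have [h0|h0] := eqVneq (a w) 0; last by left; apply: (gr_G1 S0 hA ha h0).
right; apply: (gr_G1 S0 hB hb (d := w)).
by move: (E w); rewrite monoii h0 add0r => <-; rewrite oner_eq0.
Qed.

Definition Pv n (S : 'rV[int]_n -> Prop) (v : V n) := fun w => exists s, S s /\ w = v + toQ s.

Definition Cond n (S : 'rV[int]_n -> Prop) (H : V n -> Prop) (v : V n) :=
  H v /\ forall l, gen_group S l -> ~ S l -> ~ H (v + toQ l).

Lemma kH_graded (k : fieldType) n S H :
  fg_module S H -> graded_sub S H (@kH k n H).
Proof.
move=> hM; split; first split.
- by [].
- by split; [exists [::] | move=> w]; rewrite eqxx.
- move=> f g [[s1 h1] H1] [[s2 h2] H2]; split.
    exists (s1 ++ s2) => w hw; rewrite mem_cat.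
    have [h0|h0] := eqVneq (f w) 0; last by rewrite h1.
    by rewrite h2 ?orbT //; move: hw; rewrite h0 add0r.
  move=> w hw; have [h0|h0] := eqVneq (f w) 0; last by apply: H1.
  by apply: H2; move: hw; rewrite h0 add0r.
- by move=> r f hr hf; apply: (kH_act hM hr hf).
- move=> f d [_ hH]; split.
    by exists [:: d] => w; case: (w =P d) => [->|_]; rewrite ?inE ?eqxx.
  by move=> w; case: (w =P d) => [->|_]; [apply: hH | rewrite eqxx].
Qed.

Lemma cyc_iff (k : fieldType) n S H (v : V n) f :
  S 0 -> fg_module S H -> H v ->
  cyclic S (mono k v) f <-> restr (kH H) (Pv S v) f.
Proof.
move=> S0 hM hv; split.
  case=> r [hr E]; have -> : f = act r (mono k v) by apply: funext.
  split; first exact: (kH_act hM hr (mono_kH k hv)).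
  move=> w /sum_nz [cs hcs]; rewrite mulf_eq0 negb_or => /andP[_ /mono_nz hw].
  by exists cs.2; split; [apply: hr | rewrite -hw subrK].
case=> hk hs; apply: (G2 _ _ _ hk).
- by exists [::]; split => // w; rewrite /act big_nil.
- move=> f1 g1 [r1 [h1 E1]] [r2 [h2 E2]]; exists (r1 ++ r2); split.
    by move=> cs; rewrite mem_cat => /orP [] ?; [apply: h1 | apply: h2].
  by move=> w; rewrite E1 E2 /act big_cat.
- move=> c g [r [h E]]; exists [seq (c * cs.1, cs.2) | cs <- r]; split.
    by move=> cs /mapP [cs' hcs' ->]; exact: (h cs' hcs').
  move=> w; rewrite /act big_map E /act mulr_sumr; apply: eq_bigr => cs _.
  by rewrite mulrA.
- move=> d /hs [s [hs' ->]]; exists [:: (1, s)]; split; first exact: Relt1.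
  by move=> w; rewrite act1 mul1r mono_eq.
Qed.

Lemma free_mono (k : fieldType) n S (v : V n) : free_cyclic S (mono k v).
Proof.
move=> r hr E s; transitivity (act r (mono k v) (v + toQ s)); last exact: E.
rewrite big_mkcond /act; apply: eq_bigr => cs _.
rewrite /mono subr_eq (inj_eq (addrI v)) (inj_eq (@toQ_inj n)) eq_sym.
by case: ifP; rewrite ?mulr1 ?mulr0.
Qed.

Lemma part1 (k : fieldType) n S H (v : V n) :
  fg_monoid S -> fg_module S H ->
  (@free_summand_mono k n S H v <-> Cond S H v).
Proof.
move=> hS hM; have S0 : S 0 by case: hS.
split.
  case=> hv _ [C [hC hds]]; split => // l hl hSl hw.
  have [s1 [s2 [h1 h2 el]]] := gg_diff hS hl.
  case: (hds) => _ _ h3 _.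
  have [a [c [ha hc E]]] := h3 _ (mono_kH k hw).
  have aw : a (v + toQ l) = 0.
    apply: contrapT => /eqP.
    have [_ hsupp] := (cyc_iff a S0 hM hv).1 ha.
    move=> /hsupp [s [hs /addrI /toQ_inj el']]; apply: hSl; by rewrite el'.
  have hcC : C (mono k (v + toQ l)).
    apply: (gr_G1 S0 hC hc); move: (E (v + toQ l)); rewrite aw add0r monoii => <-.
    by rewrite oner_eq0.
  have := gr_G3 hC hcC h2; rewrite -addrA -toQD el subrK => hC1.
  apply: (dsum2_disj S0 hC hds _ hC1).
  by exists [:: (1, s1)]; split; [apply: Relt1 | move=> w; rewrite act1 mul1r mono_eq].
case=> hv hc; split => //; first exact: free_mono.
exists (restr (kH H) (fun w => ~ Pv S v w)); split.
  apply: restr_graded => //; first exact: kH_graded.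
  move=> w s hs hw hnp [s' [hs' ew]]; apply: hnp.
  have ew' : w = v + toQ (s' - s) by rewrite toQB addrA -ew addrK.
  have [hl|hl] := pselect (S (s' - s)); first by exists (s' - s).
  exfalso; apply: (hc (s' - s)) => //; last by rewrite -ew'.
  by apply: ggB; apply: ggS.
apply: (dsum2_ext (A' := restr (kH H) (Pv S v))); first by move=> f; exact: (cyc_iff f S0 hM hv).
exact: (restr_dsum2 _ S0 (kH_graded k hM)).
Qed.

Definition cls n (S : 'rV[int]_n -> Prop) (a b : V n) :=
  exists l, gen_group S l /\ b = a + toQ l.

Lemma cls_refl n S (a : V n) : cls S a a.
Proof. by exists 0; split; [apply: gg0 | rewrite toQ0 addr0]. Qed.

Lemma cls_sym n S (a b : V n) : cls S a b -> cls S b a.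
Proof.
case=> l [hl ->]; exists (- l); split; first exact: ggN.
by rewrite toQN addrK.
Qed.

Lemma cls_trans n S (a b c : V n) : cls S a b -> cls S b c -> cls S a c.
Proof.
case=> l1 [h1 ->] [l2 [h2 ->]]; exists (l1 + l2); split; first exact: ggD.
by rewrite toQD addrA.
Qed.

Lemma cls_S n S (a : V n) s : S s -> cls S a (a + toQ s).
Proof. by move=> hs; exists s; split => //; apply: ggS. Qed.

Lemma cls_meet n S (a b : V n) : fg_monoid S -> cls S a b ->
  exists s1 s2, [/\ S s1, S s2 & a + toQ s1 = b + toQ s2].
Proof.
move=> hS [l [hl ->]]; have [t1 [t2 [h1 h2 el]]] := gg_diff hS hl.
exists t1, t2; split => //; by rewrite el toQB -addrA subrK.
Qed.

Fixpoint red n (S : 'rV[int]_n -> Prop) (l : seq (V n)) : seq (V n) :=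
  match l with
  | [::] => [::]
  | x :: t => x :: [seq y <- red S t | ~~ `[< cls S x y >]]
  end.

Lemma red_sub n S (l : seq (V n)) y : y \in red S l -> y \in l.
Proof.
elim: l => [|x t IH] //=; rewrite !inE => /orP [->//|].
by rewrite mem_filter => /andP [_ /IH ->]; rewrite orbT.
Qed.

Lemma red_cover n S (l : seq (V n)) y : y \in l -> exists2 z, z \in red S l & cls S z y.
Proof.
elim: l => [|x t IH] //=; rewrite inE => /orP [/eqP ->|].
  by exists x; [rewrite inE eqxx | apply: cls_refl].
move=> /IH [z hz hzy]; have [hx|hx] := pselect (cls S x z).
  by exists x; [rewrite inE eqxx | apply: cls_trans hzy].
exists z => //; rewrite inE mem_filter hz andbT; apply/orP; right.
by apply/negP => /asboolP.
Qed.

Lemma red_uc n S (l : seq (V n)) x y : x \in red S l -> y \in red S l -> cls S x y -> x = y.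
Proof.
elim: l => [|a t IH] //=; rewrite !inE.
move=> /orP [/eqP ->|hx] /orP [/eqP ->|hy] // hc.
- by move: hy; rewrite mem_filter => /andP [/negP []]; apply/asboolP.
- by move: hx; rewrite mem_filter => /andP [/negP []]; apply/asboolP; apply: cls_sym.
- move: hx hy; rewrite !mem_filter => /andP [_ hx] /andP [_ hy]; exact: IH.
Qed.

Lemma red_uniq n S (l : seq (V n)) : uniq (red S l).
Proof.
elim: l => [|a t IH] //=; rewrite filter_uniq // andbT mem_filter negb_and.
by apply/orP; left; apply/negPn/asboolP; apply: cls_refl.
Qed.

Lemma gr_kH_H (k : fieldType) n S H (N : (V n -> k) -> Prop) w :
  graded_sub S H N -> N (mono k w) -> H w.
Proof. by move=> hN /(gr_kH hN) [_ hH]; apply: hH; rewrite monoii oner_eq0. Qed.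

Lemma count_lemma (k : fieldType) n S H m (Ns : 'I_m -> (V n -> k) -> Prop)
    (mons : seq (V n)) :
  fg_monoid S -> fg_module S H -> (forall s, S s -> S (- s) -> s = 0) ->
  uniq mons -> (forall v, v \in mons <-> Cond S H v) ->
  decomposition S H Ns -> nfree S Ns = size mons.
Proof.
move=> hS hM hpt umons hmons [hind [hd1 hd2 hd3]].
have S0 : S 0 by case: hS.
have gN : forall i, graded_sub S H (Ns i) by move=> i; case: (hind i).
pose T i w := Ns i (mono k w).
have U1 : forall i w, T i w -> H w by move=> i w; apply: gr_kH_H.
have U2 : forall w, H w -> exists i, T i w.
  move=> w hw; have [fs [hfs E]] := hd2 _ (mono_kH k hw).
  have : \sum_(i < m) fs i w != 0 by rewrite -E monoii oner_eq0.
  by move=> /sum_nz [i _ hi]; exists i; apply: (gr_G1 S0 (gN i) (hfs i) hi).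
have U3 : forall i j w, T i w -> T j w -> i = j.
  move=> i j w hi hj; apply: contrapT => /eqP hij.
  pose fs := fun x : 'I_m => if x == i then mono k w else
     if x == j then (fun y => -1 * mono k w y) else (fun _ => 0).
  have hfs : forall x, Ns x (fs x).
    move=> x; rewrite /fs; case: (x =P i) => [->//|_]; case: (x =P j) => [->|_].
      exact: (gr_scal _ S0 (gN j) hj).
    exact: (gr_zero (gN x)).
  have := hd3 fs hfs; rewrite /fs.
  have HE : forall y, \sum_(x < m) (if x == i then mono k w else
     if x == j then (fun y => -1 * mono k w y) else (fun _ => 0)) y = 0.
    move=> y; rewrite (bigD1 i) //= eqxx (bigD1 j) /=; last by rewrite eq_sym.
    have hji : (j == i) = false by rewrite eq_sym (negbTE hij).
    rewrite eqxx hji big1 ?addr0.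
      by rewrite mulN1r subrr.
    by move=> x /andP [/negbTE -> /negbTE ->].
  move=> /(_ HE i w); rewrite eqxx monoii => /eqP; by rewrite oner_eq0.
have U4 : forall i d w, T i d -> T i w -> cls S d w.
  move=> i d w hd hw; apply: contrapT => hc.
  case: (hind i) => _ _ hsplit.
  have gA : graded_sub S H (restr (Ns i) (cls S d)).
    apply: restr_graded => // x s hs _ hx; apply: cls_trans hx _; exact: cls_S.
  have gB : graded_sub S H (restr (Ns i) (fun x => ~ cls S d x)).
    apply: restr_graded => // x s hs _ hx hx'; apply: hx.
    apply: cls_trans hx' _; exists (- s); split; first by apply: ggN; apply: ggS.
    by rewrite toQN addrK.
  case: (hsplit _ _ gA gB (restr_dsum2 _ S0 (gN i))) => hz.
    have hA : restr (Ns i) (cls S d) (mono k d).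
      by split => // x /mono_nz ->; apply: cls_refl.
    by move: (hz _ hA d); rewrite monoii; move/eqP; rewrite oner_eq0.
  have hB : restr (Ns i) (fun x => ~ cls S d x) (mono k w).
    by split => // x /mono_nz ->.
  by move: (hz _ hB w); rewrite monoii; move/eqP; rewrite oner_eq0.
have U5 : forall i d w, T i d -> H w -> cls S d w -> T i w.
  move=> i d w hd hw hc; have [j hj] := U2 w hw.
  have [s1 [s2 [h1 h2 e]]] := cls_meet hS hc.
  have hi' := gr_G3 (gN i) hd h1; rewrite e in hi'.
  have hj' := gr_G3 (gN j) hj h2.
  by rewrite (U3 _ _ _ hi' hj').
have FR1 : forall i, free_rank1 S (Ns i) ->
    exists d, T i d /\ forall w, T i w -> Pv S d w.
  move=> i [d [g [hg hN hfree]]].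
  have g0 : forall x, x != d -> g x = 0.
    move=> x hx; apply: contrapT => hne; have : g x != 0 by apply/eqP.
    by move/hg/eqP; rewrite (negbTE hx).
  have gd : g d != 0.
    apply/negP => /eqP gd0.
    have gz : forall x, g x = 0.
      by move=> x; case: (x =P d) => [->//|/eqP]; apply: g0.
    have hz : forall w, act [:: (1, 0)] g w = 0 by move=> w; rewrite act1 gz mulr0.
    have := hfree _ (Relt1 1 S0) hz 0.
    rewrite /Rzero big_mkcond big_seq1 /= eqxx => h1; move: (oner_neq0 k); by rewrite h1 eqxx.
  exists d; split.
    apply/hN; exists [:: ((g d)^-1, 0)]; split; first exact: Relt1.
    move=> w; rewrite act1 toQ0 subr0 /mono; case: (w =P d) => [->|/eqP hw].
      by rewrite mulVf.
    by rewrite (g0 w hw) mulr0.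
  move=> w /hN [r [hr E]]; have : act r g w != 0 by rewrite -E monoii oner_eq0.
  move=> /sum_nz [cs hcs]; rewrite mulf_eq0 negb_or => /andP [_ /hg hw].
  by exists cs.2; split; [apply: hr | rewrite -hw subrK].
have FR2 : forall i v, Cond S H v -> T i v -> free_rank1 S (Ns i).
  move=> i v [hv hc] hT; exists v, (mono k v); split.
  - by move=> w /mono_nz.
  - move=> f; rewrite (cyc_iff f S0 hM hv); split.
      move=> hf; split; first exact: (gr_kH (gN i) hf).
      move=> w hw; have hTw := gr_G1 S0 (gN i) hf hw.
      have [l [hl ew]] := U4 _ _ _ hT hTw.
      have [hsl|hsl] := pselect (S l); first by exists l.
      by exfalso; apply: (hc l hl hsl); rewrite -ew; apply: U1 hTw.
    case=> hk hs; apply: (gr_G2 S0 (gN i) hk) => d /hs [s [hs' ->]].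
    exact: (gr_G3 (gN i) hT hs').
  - exact: free_mono.
pose F := [set i : 'I_m | `[< free_rank1 S (Ns i) >]].
have hex : forall i, exists d, i \in F -> T i d /\ forall w, T i w -> Pv S d w.
  move=> i; have [hf|hf] := pselect (free_rank1 S (Ns i)).
    by have [d hd] := FR1 i hf; exists d.
  by exists 0; rewrite inE => /asboolP.
have [dfun hdf] := choice hex.
have -> : nfree S Ns = #|F| by [].
rewrite cardE -(size_map dfun); apply: perm_size; apply: uniq_perm => //.
  rewrite map_inj_in_uniq ?enum_uniq // => i j; rewrite !mem_enum => hi hj e.
  have [hi1 _] := hdf i hi; have [hj1 _] := hdf j hj.
  by rewrite e in hi1; apply: U3 hi1 hj1.
move=> x; apply/idP/idP.
  case/mapP => i; rewrite mem_enum => hi ->; apply/hmons.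
  have [hT hP] := hdf i hi; split; first exact: U1 hT.
  move=> l hl hsl hH.
  have hT' := U5 i _ _ hT hH (ex_intro _ l (conj hl erefl)).
  have [s [hs /addrI /toQ_inj el]] := hP _ hT'.
  by apply: hsl; rewrite el.
move/hmons => hc; have [i hi] := U2 _ hc.1.
have hF : i \in F by rewrite inE; apply/asboolP; exact: FR2 hc hi.
apply/mapP; exists i; first by rewrite mem_enum.
have [hT hP] := hdf i hF.
have [s [hs ex]] := hP _ hi.
have [l [hl edi]] := U4 _ _ _ hi hT.
have hsl : S l.
  apply: contrapT => hsl; apply: (hc.2 l hl hsl); rewrite -edi; exact: U1 hT.
have e0 : l + s = 0.
  apply: toQ_inj; rewrite toQD toQ0; apply: (addrI x).
  by rewrite addr0 addrA -edi -ex.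
have es : s = - l by apply: (addrI l); rewrite e0 subrr.
have l0 : l = 0 by apply: hpt => //; rewrite -es.
by rewrite edi l0 toQ0 addr0.
Qed.

Lemma exist_dec (k : fieldType) n S H (hs : seq (V n)) :
  fg_monoid S -> fg_module S H ->
  (forall v, H v <-> exists j s, [/\ (j < size hs)%N, S s & v = hs`_j + toQ s]) ->
  exists m (Ns : 'I_m -> (V n -> k) -> Prop), decomposition S H Ns.
Proof.
move=> hS hM hspec; have S0 : S 0 by case: hS.
have hsH : forall y, y \in hs -> H y.
  move=> y hy; apply/hspec; exists (index y hs), 0; split => //.
    by rewrite index_mem.
  by rewrite toQ0 addr0 nth_index.
pose reps := red S hs.
pose Ns := fun i : 'I_(size reps) => restr (@kH k n H) (cls S (reps`_i)).
have uc : forall (i j : 'I_(size reps)) w, cls S reps`_i w -> cls S reps`_j w -> i = j.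
  move=> i j w hi hj; apply/val_inj/eqP.
  rewrite -(nth_uniq 0 (ltn_ord i) (ltn_ord j) (red_uniq _ _)).
  apply/eqP; apply: red_uc; [exact: mem_nth|exact: mem_nth|].
  exact: cls_trans hi (cls_sym hj).
have gK := kH_graded k hM.
have gNs : forall i, graded_sub S H (Ns i).
  move=> i; apply: restr_graded => // x s hs' _ hx; apply: cls_trans hx (cls_S _ hs').
exists (size reps), Ns; split.
- move=> i; split; first exact: gNs.
  + move=> hz; have hr : reps`_i \in hs by apply: red_sub (mem_nth _ (ltn_ord i)).
    have hm : Ns i (mono k reps`_i).
      split; first by apply: mono_kH; apply: hsH.
      by move=> x /mono_nz ->; apply: cls_refl.
    by move: (hz _ hm reps`_i); rewrite monoii; move/eqP; rewrite oner_eq0.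
  + move=> A B gA gB hd.
    have [hA|hA] := pselect (zero_mod A); first by left.
    right => f hf w; apply: contrapT => hfw.
    have [g [x [hg hgx]]] : exists g x, A g /\ g x != 0.
      apply: contrapT => hn; apply: hA => g hg x; apply: contrapT => hgx.
      by apply: hn; exists g, x; split => //; apply/eqP.
    have mA := gr_G1 S0 gA hg hgx.
    have mB : B (mono k w) by apply: (gr_G1 S0 gB hf); apply/eqP.
    case: (hd) => h1 h2 _ _.
    have [_ cx] := h1 _ mA; have [_ cw] := h2 _ mB.
    have cx' : cls S reps`_i x by apply: cx; rewrite monoii oner_eq0.
    have cw' : cls S reps`_i w by apply: cw; rewrite monoii oner_eq0.
    have [s1 [s2 [e1 e2 e]]] := cls_meet hS (cls_trans (cls_sym cx') cw').
    have mA' := gr_G3 gA mA e1; have mB' := gr_G3 gB mB e2; rewrite e in mA'.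
    exact: (dsum2_disj S0 gB hd mA' mB').
- split.
  + by move=> i f [].
  + move=> f hf; exists (fun i w => if `[< cls S reps`_i w >] then f w else 0); split.
      move=> i; case: (hf) => [[sp hsp] hH]; split; first split.
      * by exists sp => w; case: ifP => _; [apply: hsp | rewrite eqxx].
      * by move=> w; case: ifP => _; [apply: hH | rewrite eqxx].
      * by move=> w; case: ifP => [/asboolP //|_]; rewrite eqxx.
    move=> w; have [h0|h0] := eqVneq (f w) 0.
      by rewrite h0 big1 // => i _; case: ifP.
    have hw : H w by case: hf => _; apply.
    have [j [s [hj hs' ew]]] := (hspec w).1 hw.
    have [z hz hzc] := red_cover S (mem_nth 0 hj).
    have hzw : cls S z w by apply: cls_trans hzc _; rewrite ew; apply: cls_S.
    have hi0 : (index z reps < size reps)%N by rewrite index_mem.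
    pose i0 := Ordinal hi0.
    have ei0 : reps`_i0 = z by rewrite /= nth_index.
    rewrite (bigD1 i0) //= ei0 (asboolT hzw) big1 ?addr0 // => i hi.
    case: ifP => // /asboolP hc; exfalso; move/negP: hi; apply; apply/eqP.
    by apply: uc hc _; rewrite ei0.
  + move=> fs hfs E i w; apply: contrapT => hne.
    have hfw : fs i w != 0 by apply/eqP.
    have ci : cls S reps`_i w by case: (hfs i) => _; apply.
    move: (E w); rewrite (bigD1 i) //= big1 ?addr0; first by move=> e; apply: hne.
    move=> j hj; apply: contrapT => hn; have hj0 : fs j w != 0 by apply/eqP.
    have cj : cls S reps`_j w by case: (hfs j) => _; apply.
    by move/negP: hj; apply; apply/eqP; exact: uc cj ci.
Qed.

Unset Implicit Arguments. Set Strict Implicit.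

Theorem lemma3p8 (k : fieldType) (p e n : nat) (S : 'rV[int]_n -> Prop)
    (H : 'rV[rat]_n -> Prop) :
  p \in [pchar k] ->
  fg_monoid S ->
  (forall v, H v -> frac_lattice (p ^ e)%N S v) ->
  fg_module S H ->
  (forall v : 'rV[rat]_n, @free_summand_mono k n S H v <->
     (H v /\ forall l, gen_group S l -> ~ S l -> ~ H (v + toQ l))) /\
  ((forall s, S s -> S (- s) -> s = 0) ->
   exists mons : seq 'rV[rat]_n,
     [/\ uniq mons,
         (forall v, v \in mons <->
            (H v /\ forall l, gen_group S l -> ~ S l -> ~ H (v + toQ l))),
         (exists m (Ns : 'I_m -> ('rV[rat]_n -> k) -> Prop), @decomposition k n S H m Ns) &
         (forall m (Ns : 'I_m -> ('rV[rat]_n -> k) -> Prop),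
            @decomposition k n S H m Ns -> @nfree k n S m Ns = size mons)]).
Proof.
move=> _ hS _ hM; split; first by move=> v; exact: (part1 k v hS hM).
move=> hpt; have S0 : S 0 by case: hS.
case: (hM) => _ [hs hspec].
pose mons := undup [seq h <- hs | `[< Cond S H h >]].
have hmons : forall v, v \in mons <-> Cond S H v.
  move=> v; rewrite mem_undup mem_filter; split.
    by case/andP => /asboolP.
  move=> hc; rewrite (asboolT hc) /=.
  have [j [s [hj hs' ev]]] := (hspec v).1 hc.1.
  have hH : H hs`_j by apply/hspec; exists j, 0; split => //; rewrite toQ0 addr0.
  have e1 : hs`_j = v + toQ (- s) by rewrite ev toQN addrK.
  have hsn : S (- s).
    apply: contrapT => hn; apply: (hc.2 (- s)) => //; last by rewrite -e1.
    by apply: ggN; apply: ggS.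
  have s0 : s = 0 by apply: hpt.
  by rewrite ev s0 toQ0 addr0 mem_nth.
exists mons; split.
- exact: undup_uniq.
- exact: hmons.
- exact: (exist_dec k hS hM hspec).
- move=> m Ns hd; exact: (count_lemma hS hM hpt (undup_uniq _) hmons hd).
Qed.
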